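(* Assume $abcd\neq0$. For every $\omega$ on the unit circle, \[T(\omega)=\frac{|a|^2}{|a|^2+|b|^2{\zeta'_M}^2},\qquad R(\omega)=\frac{|b|^2{\zeta'_M}^2}{|a|^2+|b|^2{\zeta'_M}^2},\] so in particular $T(\omega)+R(\omega)=1$.
   Context: Setting: $M\ge1$, $C=\begin{bmatrix} a&b\\ c&d\end{bmatrix}$ a $2\times2$ unitary matrix, $\Delta=\det C$; $|L\rangle=(1,0)^\top$, $|R\rangle=(0,1)^\top$; $\Gamma_M=\{0,\dots,M-1\}$. $E_M$ is the linear map on $\ell^2(\Gamma_M;\mathbb{C}^2)$ with $(E_M\varphi)(x)=P\varphi(x+1)+Q\varphi(x-1)$, $\varphi(-1)=\varphi(M)=0$, $P=\begin{bmatrix} a&b\\0&0\end{bmatrix}$, $Q=\begin{bmatrix}0&0\\c&d\end{bmatrix}$. For $\xi\in\mathbb{R}$, $z=e^{-i\xi}$, let $\varphi$ be the unique solution of $(z-E_M)\varphi=\delta_0|R\rangle$, and write $\varphi(x;L)=\langle L|\varphi(x)\rangle$, $\varphi(x;R)=\langle R|\varphi(x)\rangle$. Fix a square root $\Delta^{1/2}$ and set $\omega=\Delta^{-1/2}z$ (on the unit circle). The transmission and reflection rates are $T(\omega)=|d\,\varphi(M-1;R)|^2$ and $R(\omega)=|a\,\varphi(0;L)+b\,\varphi(0;R)|^2$. Put $x(\omega)=\frac{\omega+\omega^{-1}}{2|a|}$ and $\zeta'_m=U_{m-1}(x(\omega))$, $U_m$ the Chebyshev polynomials of the second kind ($U_{-1}=0$,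 $U_0=1$, $U_{m+1}(t)=2tU_m(t)-U_{m-1}(t)$). *)

(* Defs.v *)
From HB Require Import structures.
From mathcomp Require Import all_boot all_order all_algebra.
From mathcomp Require Import complex.
Set Implicit Arguments. Unset Strict Implicit. Unset Printing Implicit Defensive.
Import Order.TTheory GRing.Theory Num.Theory.
Local Open Scope ring_scope.

Section Defs.
Variable F : numClosedFieldType.

Definition mx22 (a b c d : F) : 'M[F]_2 :=
  \matrix_(i < 2, j < 2)
    if i == 0 then (if j == 0 then a else b) else (if j == 0 then c else d).

Definition unitary2 (Cm : 'M[F]_2) : Prop :=
  Cm *m (map_mx Num.conj Cm)^T = 1%:M.

Definition ketL : 'cV[F]_2 := \col_(i < 2) if i == 0 then 1 else 0.
Definition ketR : 'cV[F]_2 := \col_(i < 2) if i == 0 then 0 else 1.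

Definition braL (v : 'cV[F]_2) : F := v 0 0.
Definition braR (v : 'cV[F]_2) : F := v 1 0.

Definition Pmx (a b : F) : 'M[F]_2 := mx22 a b 0 0.
Definition Qmx (c d : F) : 'M[F]_2 := mx22 0 0 c d.

(* extension by zero of phi : Gamma_M -> C^2 to all x : nat; the value at
   x = -1 is handled separately in E_M (boundary condition phi(-1) = 0). *)
Definition ext (M : nat) (phi : 'I_M -> 'cV[F]_2) (x : nat) : 'cV[F]_2 :=
  match insub x with Some i => phi i | None => 0 end.

Definition E_M (M : nat) (a b c d : F) (phi : 'I_M -> 'cV[F]_2)
  (x : 'I_M) : 'cV[F]_2 :=
  Pmx a b *m ext phi x.+1
  + Qmx c d *m (if (x == 0 :> nat) then 0 else ext phi x.-1).

Definition delta0R (M : nat) (x : 'I_M) : 'cV[F]_2 :=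
  if (x == 0 :> nat) then ketR else 0.

(* (U_{n-1}(t), U_n(t)) for Chebyshev polynomials of the second kind,
   U_{-1} = 0, U_0 = 1, U_{m+1} = 2 t U_m - U_{m-1}. *)
Fixpoint chebUpair (t : F) (n : nat) : F * F :=
  match n with
  | 0 => (0, 1)
  | n'.+1 => let p := chebUpair t n' in (p.2, 2 * t * p.2 - p.1)
  end.

Definition chebUprev (t : F) (m : nat) : F := (chebUpair t m).1.

End Defs.
Arguments delta0R {F M} x.
Arguments ketL {F}.
Arguments ketR {F}.

(* Main.v *)
Require Import Defs.
From HB Require Import structures.
From mathcomp Require Import all_boot all_order all_algebra.
From mathcomp Require Import complex ring zify.
From Stdlib Require Import Lia.
Import Order.TTheory GRing.Theory Num.Theory.
Local Open Scope ring_scope.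
Set Warnings "-all".
Ltac fd := field; repeat (apply/andP; split); done.
Section H.
Variable F : numClosedFieldType.

Lemma l1 : lift ord0 (ord0 : 'I_1) = (1 : 'I_2). Proof. by apply/val_inj. Qed.
Lemma o0 : (ord0 : 'I_2) = 0. Proof. by apply/val_inj. Qed.

Lemma ext_ord M (phi : 'I_M -> 'cV[F]_2) (x : 'I_M) : ext phi x = phi x.
Proof. by rewrite /ext valK. Qed.

Lemma ext_out M (phi : 'I_M -> 'cV[F]_2) (x : nat) : (M <= x)%N -> ext phi x = 0.
Proof. by move=> h; rewrite /ext insubF // ltnNge h. Qed.

Lemma comp0 M (a b c d k : F) (phi : 'I_M -> 'cV[F]_2) (x : 'I_M) :
  (k *: phi x - E_M a b c d phi x) 0 0 =
  k * braL (ext phi x) - (a * braL (ext phi x.+1) + b * braR (ext phi x.+1)).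
Proof.
rewrite /E_M /braL /braR ext_ord !mxE !big_ord_recl big_ord0 !mxE /=.
case: (x == 0 :> nat); rewrite ?mxE ?big_ord_recl ?big_ord0 ?mxE /=;
  rewrite ?l1 ?o0; ring.
Qed.

Lemma comp1 M (a b c d k : F) (phi : 'I_M -> 'cV[F]_2) (x : 'I_M) :
  (k *: phi x - E_M a b c d phi x) 1 0 =
  k * braR (ext phi x) - (if (x == 0 :> nat) then 0 else
     c * braL (ext phi x.-1) + d * braR (ext phi x.-1)).
Proof.
rewrite /E_M /braL /braR ext_ord !mxE !big_ord_recl big_ord0 !mxE /=.
case: (x == 0 :> nat); rewrite ?mxE ?big_ord_recl ?big_ord0 ?mxE /=;
  rewrite ?l1 ?o0; ring.
Qed.

Lemma dz0 M (x : 'I_M) : (@delta0R F M x) 0 0 = 0.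
Proof. by rewrite /delta0R; case: ifP; rewrite ?mxE. Qed.
Lemma dz1 M (x : 'I_M) : (@delta0R F M x) 1 0 = if (x == 0 :> nat) then 1 else 0.
Proof. by rewrite /delta0R; case: ifP; rewrite ?mxE. Qed.


Lemma unit_eqs (a b c d : F) : unitary2 (mx22 a b c d) ->
  [/\ a * a^* + b * b^* = 1, a * c^* + b * d^* = 0 & c * c^* + d * d^* = 1].
Proof.
rewrite /unitary2 => hU.
have e00 := congr1 (fun A : 'M[F]_2 => A 0 0) hU.
have e01 := congr1 (fun A : 'M[F]_2 => A 0 1) hU.
have e11 := congr1 (fun A : 'M[F]_2 => A 1 1) hU.
move: e00 e01 e11; rewrite /= !mxE !big_ord_recl big_ord0 !mxE /= ?l1 ?o0 /=.
rewrite !big_ord0 !addr0 => e00 e01 e11; by split.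
Qed.

Lemma det_mx22 (a b c d : F) : \det (mx22 a b c d) = a * d - b * c.
Proof.
rewrite (expand_det_row _ 0) !big_ord_recl big_ord0 /cofactor !det_mx11 !mxE /bump /= expr0 expr1; ring.
Qed.

Lemma cheb_cassini (t : F) n :
  (chebUpair t n).2 ^+ 2 - 2 * t * (chebUpair t n).1 * (chebUpair t n).2
  + (chebUpair t n).1 ^+ 2 = 1.
Proof.
elim: n => [|n IH] /=; first by ring.
rewrite -[RHS]IH; ring.
Qed.

Lemma cheb_conj (t : F) n : t^* = t ->
  ((chebUpair t n).1)^* = (chebUpair t n).1 /\ ((chebUpair t n).2)^* = (chebUpair t n).2.
Proof.
move=> ht; elim: n => [|n [IH1 IH2]] /=; first by rewrite rmorph0 rmorph1.
split; first exact: IH2. by rewrite rmorphB !rmorphM /= IH1 IH2 ht rmorph_nat.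
Qed.


Lemma chain (L R : nat -> F) (m : nat) (a b c d s w r al : F) :
  a != 0 -> b != 0 -> al != 0 -> s != 0 -> w != 0 ->
  c = - s ^+ 2 * ((1 - al ^+ 2) / b) -> d = s ^+ 2 * (al ^+ 2 / a) ->
  (forall x, (x < m)%N -> s * w * L x = a * L x.+1 + b * R x.+1) ->
  L m = 0 -> R m = r ->
  (forall x, (0 < x <= m)%N -> s * w * R x = c * L x.-1 + d * R x.-1) ->
  forall n, (n <= m)%N ->
  L (m - n)%N = r * (a / (al * s)) ^+ n * (chebUpair ((w + w^-1) / (2 * al)) n).1
                  * (b * al * w^-1 / a) /\
  R (m - n)%N = r * (a / (al * s)) ^+ n * ((chebUpair ((w + w^-1) / (2 * al)) n).2
                  - al * w^-1 * (chebUpair ((w + w^-1) / (2 * al)) n).1).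
Proof.
move=> a0 b0 al0 s0 w0 hc hd E1 Lm Rm E2.
have two0 : (2 : F) != 0 by rewrite pnatr_eq0.
have z0 : s * w != 0 by rewrite mulf_neq0.
have d0 : d != 0 by rewrite hd mulf_neq0 ?expf_neq0 // mulf_neq0 ?expf_neq0 ?invr_eq0.
elim=> [|n IH] hn.
  rewrite subn0 Lm Rm /=; split; ring.
have [IHL IHR] := IH (ltnW hn).
set x := (m - n.+1)%N.
have hx1 : x.+1 = (m - n)%N by rewrite /x subnSK.
have hxm : (x < m)%N by rewrite /x; lia.
have hLx : L x = (a * L x.+1 + b * R x.+1) / (s * w).
  by rewrite -E1 //; fd.
have hRx : R x = (s * w * R x.+1 - c * L x) / d.
  have e2 : s * w * R x.+1 = c * L x + d * R x.
    by rewrite E2 //; apply/andP; split; lia.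
  by rewrite e2; fd.
rewrite hx1 IHL IHR in hLx hRx.
move: hRx; rewrite hLx => hRx.
rewrite hRx /= !exprS hc hd.
set p := (chebUpair _ n).1; set q := (chebUpair _ n).2.
set K := _ ^+ n.
split; fd.
Qed.
End H.

Lemma main_gen (F : numClosedFieldType) (M : nat) (a b c d sqrtDelta omega : F)
  (phi : 'I_M -> 'cV[F]_2) :
  (0 < M)%N ->
  unitary2 (mx22 a b c d) ->
  a * b * c * d != 0 ->
  sqrtDelta ^+ 2 = \det (mx22 a b c d) ->
  `|omega| = 1 ->
  (forall x : 'I_M,
     (sqrtDelta * omega) *: phi x - E_M a b c d phi x = delta0R x) ->
  let z' := chebUprev ((omega + omega^-1) / (2 * `|a|)) M in
  let T := `|d * braR (ext phi M.-1)| ^+ 2 in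
  let Rr := `|a * braL (ext phi 0) + b * braR (ext phi 0)| ^+ 2 in
  T = `|a| ^+ 2 / (`|a| ^+ 2 + `|b| ^+ 2 * z' ^+ 2) /\
  Rr = `|b| ^+ 2 * z' ^+ 2 / (`|a| ^+ 2 + `|b| ^+ 2 * z' ^+ 2) /\
  T + Rr = 1.
Proof.
set s := sqrtDelta; set w := omega.
move=> hM hU habcd hs hw Heq z' T Rr; rewrite /z' /T /Rr {z' T Rr}.
have [h00 h01 h11] := @unit_eqs _ _ _ _ _ hU.
move: habcd; rewrite !mulf_eq0 !negb_or => /andP[/andP[/andP[a0 b0] c0] d0].
rewrite det_mx22 in hs.
set D := a * d - b * c in hs.
have h01c : a^* * c + b^* * d = 0.
  have := congr1 Num.conj h01; rewrite rmorph0 rmorphD !rmorphM /= !conjCK => <-; ring.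
have hd : d = D * a^*.
  apply/eqP; rewrite -subr_eq0; apply/eqP.
  transitivity (- (d * (a * a^* + b * b^* - 1) - b * (a^* * c + b^* * d))); first by rewrite /D; ring.
  by rewrite h00 h01c subrr; ring.
have hc : c = - D * b^*.
  apply/eqP; rewrite -subr_eq0; apply/eqP.
  transitivity (c * (1 - a * a^* - b * b^*) + a * (a^* * c + b^* * d)); first by rewrite /D; ring.
  by rewrite -h00 h01c; ring.
have hDD : D * D^* = 1.
  have : c * c^* + d * d^* = D * D^* * (a * a^* + b * b^*).
    rewrite {1 2}hc {1 2}hd !rmorphM /= rmorphN /= !conjCK; ring.
  by rewrite h00 mulr1 h11.
have nD : `|D| = 1.
  by apply/eqP; rewrite -sqrp_eq1 ?normr_ge0 // normCK hDD.
have ns : `|s| = 1.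
  by apply/eqP; rewrite -sqrp_eq1 ?normr_ge0 // -normrX hs nD.
have s0 : s != 0 by rewrite -normr_eq0 ns oner_eq0.
have w0 : w != 0 by rewrite -normr_eq0 hw oner_eq0.
have wc : w^* = w^-1 by rewrite invC_norm hw expr1n invr1 mul1r.
set al := `|a|.
have al0 : al != 0 by rewrite normr_eq0.
have alc : al^* = al by rewrite geC0_conj // normr_ge0.
have haa : a * a^* = al ^+ 2 by rewrite normCK.
have ac : a^* = al ^+ 2 / a by rewrite -haa; fd.
have bc : b^* = (1 - al ^+ 2) / b by rewrite -haa -h00; fd.
have hd' : d = s ^+ 2 * (al ^+ 2 / a) by rewrite hd hs ac.
have hc' : c = - s ^+ 2 * ((1 - al ^+ 2) / b) by rewrite hc hs bc.
pose L := fun n => braL (ext phi n).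
pose Rf := fun n => braR (ext phi n).
have E0 : forall (x : nat) (hx : (x < M)%N),
    s * w * L x - (a * L x.+1 + b * Rf x.+1) = 0.
  move=> x hx.
  have := congr1 (fun A : 'cV[F]_2 => A 0 0) (Heq (Ordinal hx)).
  by rewrite /= (@comp0 _ M a b c d (s * w) phi (Ordinal hx)) dz0.
have E1 : forall (x : nat), (x < M)%N -> s * w * L x = a * L x.+1 + b * Rf x.+1.
  by move=> x hx; apply/eqP; rewrite -subr_eq0 E0.
have E2 : forall (x : nat), (0 < x < M)%N -> s * w * Rf x = c * L x.-1 + d * Rf x.-1.
  move=> x /andP[x0 hx]; apply/eqP; rewrite -subr_eq0; apply/eqP.
  have := congr1 (fun A : 'cV[F]_2 => A 1 0) (Heq (Ordinal hx)).
  rewrite /= (@comp1 _ M a b c d (s * w) phi (Ordinal hx)) dz1 /=.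
  by rewrite (negbTE (lt0n_neq0 x0)) => h; exact: h.
have E3 : s * w * Rf 0%N = 1.
  have := congr1 (fun A : 'cV[F]_2 => A 1 0) (Heq (Ordinal hM)).
  rewrite /= (@comp1 _ M a b c d (s * w) phi (Ordinal hM)) dz1 /=.
  by move/eqP; rewrite subr0 => /eqP.
have extM : ext phi M = 0 by rewrite ext_out.
have Lm : L M.-1 = 0.
  have := E1 M.-1; rewrite ltn_predL hM => /(_ isT); rewrite prednK //.
  rewrite /L /Rf extM /braL /braR !mxE !mulr0 addr0 => /eqP.
  by rewrite mulf_eq0 mulf_eq0 (negbTE s0) (negbTE w0) => /eqP.
set t := (w + w^-1) / (2 * al).
set m := M.-1.
set r := Rf m.
have [HL HR] := @chain F L Rf m a b c d s w r al a0 b0 al0 s0 w0 hc' hd'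
  (fun x hx => E1 x (ltac:(rewrite /m in hx; lia))) Lm erefl
  (fun x hx => E2 x (ltac:(rewrite /m in hx; lia))) m (leqnn m).
rewrite subnn -/t in HL HR.
set p := (chebUpair t m).1 in HL HR.
set q := (chebUpair t m).2 in HL HR.
have hz : chebUprev t M = q by rewrite /chebUprev /q /m -{1}(prednK hM).
rewrite hz.
change (braL (ext phi 0)) with (L 0%N).
change (braR (ext phi 0)) with (Rf 0%N).
change (braR (ext phi M.-1)) with r.
set K0 := q - al * w^-1 * p in HR.
have tc : t^* = t.
  rewrite /t !(rmorphM, rmorphD, fmorphV) /=. rewrite rmorph1 wc invrK alc.
  by rewrite addrC.
have [pc qc] := @cheb_conj F t m tc.
rewrite -/p -/q in pc qc.
have cass := @cheb_cassini F t m.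
rewrite -/p -/q in cass.
have nK0 : `|K0| ^+ 2 = al ^+ 2 + (1 - al ^+ 2) * q ^+ 2.
  rewrite normCK /K0 !(rmorphM, rmorphB, fmorphV) /= pc qc alc. rewrite wc invrK.
  apply/eqP; rewrite -subr_eq0; apply/eqP.
  transitivity (al ^+ 2 * (q ^+ 2 - 2 * t * p * q + p ^+ 2 - 1)).
    rewrite /t; fd.
  by rewrite cass subrr mulr0.
have nk : `|a / (al * s)| = 1.
  by rewrite normrM normfV normrM normr_id ns mulr1 -/al mulfV.
have hr : `|r| * `|K0| = 1.
  have := congr1 (fun x : F => `|x|) E3; rewrite HR !normrM normrX nk expr1n ns hw normr1 !mul1r mulr1.
  by [].
have nb : `|b| ^+ 2 = 1 - al ^+ 2 by rewrite normCK -haa -h00 addrC addKr.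
have nd : `|d| = al.
  rewrite hd' normrM normrX ns expr1n mul1r normrM normrX -/al normfV normr_id -/al; fd.
have ha : a * L 0%N + b * Rf 0%N = r * (a / (al * s)) ^+ m * b * q.
  rewrite HL HR /K0; fd.
have nq : `|q| ^+ 2 = q ^+ 2 by rewrite normCK qc expr2.
set den := al ^+ 2 + (1 - al ^+ 2) * q ^+ 2 in nK0.
have hr2 : `|r| ^+ 2 * den = 1 by rewrite -nK0 -exprMn hr expr1n.
have den0 : den != 0.
  apply/eqP => h0; move: hr2; rewrite h0 mulr0 => /eqP; by rewrite eq_sym oner_eq0.
have hT : `|d * r| ^+ 2 = al ^+ 2 / den.
  rewrite normrM exprMn nd.
  have -> : `|r| ^+ 2 = 1 / den by rewrite -hr2; fd.
  fd.
have hRr : `|a * L 0%N + b * Rf 0%N| ^+ 2 = (1 - al ^+ 2) * q ^+ 2 / den.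
  rewrite ha 3!normrM normrX nk expr1n mulr1 !exprMn nb nq.
  have -> : `|r| ^+ 2 = 1 / den by rewrite -hr2; fd.
  fd.
rewrite hT hRr nb -/den.
split; first by [].
split; first by [].
rewrite /den; fd.
Qed.

Theorem mainTheorem4 (R : rcfType) (M : nat) (a b c d sqrtDelta omega : R[i])
  (phi : 'I_M -> 'cV[R[i]]_2) :
  (0 < M)%N ->
  unitary2 (mx22 a b c d) ->
  a * b * c * d != 0 ->
  sqrtDelta ^+ 2 = \det (mx22 a b c d) ->
  `|omega| = 1 ->
  (forall x : 'I_M,
     (sqrtDelta * omega) *: phi x - E_M a b c d phi x = delta0R x) ->
  let z' := chebUprev ((omega + omega^-1) / (2 * `|a|)) M in
  let T := `|d * braR (ext phi M.-1)| ^+ 2 in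
  let Rr := `|a * braL (ext phi 0) + b * braR (ext phi 0)| ^+ 2 in
  T = `|a| ^+ 2 / (`|a| ^+ 2 + `|b| ^+ 2 * z' ^+ 2) /\
  Rr = `|b| ^+ 2 * z' ^+ 2 / (`|a| ^+ 2 + `|b| ^+ 2 * z' ^+ 2) /\
  T + Rr = 1.
Proof. exact: (@main_gen _ M a b c d sqrtDelta omega phi). Qed.
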